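(* Let $Q\in\mathbb{R}^{n\times n}$ be symmetric positive definite, $\|x\|=\sqrt{x^TQx}$, $\|u\|_*=\sqrt{u^TQ^{-1}u}$. Let $f\colon\mathbb{R}^n\to\mathbb{R}$ be convex and differentiable with $\|\nabla f(x)-\nabla f(y)\|_*\le L\|x-y\|$ for all $x,y$, and assume $f$ has a minimizer $x_\star$, $f_\star=f(x_\star)$. Let $w\colon\mathbb{R}^n\to\mathbb{R}$ be differentiable and $1$-strongly convex with respect to $\|\cdot\|$, and $V_x(y)=w(y)-\langle\nabla w(x),y-x\rangle-w(x)$. Let $\{\alpha_k\}_{k=1}^\infty$ be positive with $\alpha_1=\frac2L$ and $0\le\alpha_{k+1}^2L-2\alpha_{k+1}\le\alpha_k^2L$ for $k=1,2,\dots$, and let $\tau_k=\frac{2}{\alpha_{k+1}L}$ for $k=1,2,\dots$. Given $x_0$, let $z_0=x_0$ and for $k=0,1,\dots$ \[ y_{k+1}=x_k-L^{-1}Q^{-1}\nabla f(x_k),\quad z_{k+1}=\operatorname*{argmin}_{y\in\mathbb{R}^n}\{V_{z_k}(y)+\langle\alpha_{k+1}\nabla f(x_k),y-x_k\rangle\},\quad x_{k+1}=(1-\tau_{k+1})y_{k+1}+\tau_{k+1}z_{k+1}. \] Then for $k=1,2,\dots$, \[ f(y_k)-f_\star\le\frac{2V_{x_0}(x_\star)}{L\alpha_k^2}. \]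
   Context: $\langle\cdot,\cdot\rangle$ is the standard Euclidean inner product. ''$1$-strongly convex with respect to $\|\cdot\|$'' means $w(y)\ge w(x)+\langle\nabla w(x),y-x\rangle+\frac12\|y-x\|^2$ for all $x,y$. *)

(* Defs.v *)
From HB Require Import structures.
From mathcomp Require Import all_boot all_order all_algebra.
From mathcomp Require Import all_classical all_reals all_analysis.
Set Implicit Arguments. Unset Strict Implicit. Unset Printing Implicit Defensive.
Import Order.TTheory GRing.Theory Num.Theory.
Import numFieldNormedType.Exports.
Local Open Scope ring_scope.

Definition inner (R : realType) (n : nat) (u v : 'cV[R]_n) : R :=
  (u^T *m v) ord0 ord0.

Definition qform (R : realType) (n : nat) (Q : 'M[R]_n) (x : 'cV[R]_n) : R :=
  (x^T *m Q *m x) ord0 ord0.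

Definition spd (R : realType) (n : nat) (Q : 'M[R]_n) : Prop :=
  Q^T = Q /\ (forall x : 'cV[R]_n, x != 0 -> 0 < qform Q x).

Definition Qnorm (R : realType) (n : nat) (Q : 'M[R]_n) (x : 'cV[R]_n) : R :=
  Num.sqrt (qform Q x).

Definition Qdnorm (R : realType) (n : nat) (Q : 'M[R]_n) (u : 'cV[R]_n) : R :=
  Num.sqrt (qform (invmx Q) u).

Definition is_gradient (R : realType) (n : nat) (f : 'cV[R]_n -> R)
    (g : 'cV[R]_n -> 'cV[R]_n) : Prop :=
  (forall x, differentiable f x) /\ (forall x h, 'd f x h = inner (g x) h).

Definition convex_fun (R : realType) (n : nat) (f : 'cV[R]_n -> R) : Prop :=
  forall (x y : 'cV[R]_n) (t : R), 0 <= t <= 1 ->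
    f (t *: x + (1 - t) *: y) <= t * f x + (1 - t) * f y.

Definition strongly_convex1 (R : realType) (n : nat) (Q : 'M[R]_n)
    (w : 'cV[R]_n -> R) (gw : 'cV[R]_n -> 'cV[R]_n) : Prop :=
  forall x y, w x + inner (gw x) (y - x) + 2^-1 * (Qnorm Q (y - x)) ^+ 2 <= w y.

Definition bregman (R : realType) (n : nat) (w : 'cV[R]_n -> R)
    (gw : 'cV[R]_n -> 'cV[R]_n) (x y : 'cV[R]_n) : R :=
  w y - inner (gw x) (y - x) - w x.

(* Main.v *)
Require Import Defs.
From HB Require Import structures.
From mathcomp Require Import all_boot all_order all_algebra.
From mathcomp Require Import all_classical all_reals all_analysis.
Import Order.TTheory GRing.Theory Num.Theory.
Import numFieldNormedType.Exports.
Local Open Scope ring_scope.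
From mathcomp Require Import lra ring.
Lemma dir_le (R : realType) (n : nat) (f : 'cV[R]_n -> R) (x d : 'cV[R]_n) (c : R) :
  differentiable f x ->
  (forall t : R, 0 < t < 1 -> (f (x + t *: d) - f x) / t <= c) ->
  'd f x d <= c.
Proof.
move=> df H.
rewrite -deriveE //.
have /derivableP [] := diff_derivable (v := d) df.
rewrite /derivable => cv _.
have cv' := cvg_dnbhs_at_right cv.
apply: (cvgr_to_le cv').
near=> t.
have t0 : 0 < t by near: t; exact: nbhs_right_gt.
have t1 : t < 1 by near: t; exact: nbhs_right_lt ltr01.
have := H t (andb_true_intro (conj t0 t1)).
by rewrite /= mulrC [t *: d + x]addrC.
Unshelve. all: by end_near.
Qed.

Lemma dir_ge (R : realType) (n : nat) (f : 'cV[R]_n -> R) (x d : 'cV[R]_n) (c : R) :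
  differentiable f x ->
  (forall t : R, 0 < t < 1 -> c <= (f (x + t *: d) - f x) / t) ->
  c <= 'd f x d.
Proof.
move=> df H.
rewrite -deriveE //.
have /derivableP [] := diff_derivable (v := d) df.
rewrite /derivable => cv _.
have cv' := cvg_dnbhs_at_right cv.
apply: (cvgr_to_ge cv').
near=> t.
have t0 : 0 < t by near: t; exact: nbhs_right_gt.
have t1 : t < 1 by near: t; exact: nbhs_right_lt ltr01.
have := H t (andb_true_intro (conj t0 t1)).
by rewrite /= mulrC [t *: d + x]addrC.
Unshelve. all: by end_near.
Qed.
Notation cv R n := ('cV[R]_n) (only parsing).

Lemma innerC {R : realType} {n : nat} (u v : 'cV[R]_n) : inner u v = inner v u.
Proof.
rewrite /inner.
have -> : (u^T *m v) ord0 ord0 = ((u^T *m v)^T) ord0 ord0 by rewrite [RHS]mxE.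
by rewrite trmx_mul trmxK.
Qed.
Lemma innerDr {R : realType} {n : nat} (u v w : 'cV[R]_n) : inner u (v + w) = inner u v + inner u w.
Proof. by rewrite /inner mulmxDr mxE. Qed.
Lemma innerDl {R : realType} {n : nat} (u v w : 'cV[R]_n) : inner (v + w) u = inner v u + inner w u.
Proof. by rewrite innerC innerDr !(innerC u). Qed.
Lemma innerZr {R : realType} {n : nat} (u : 'cV[R]_n) a v : inner u (a *: v) = a * inner u v.
Proof. by rewrite /inner -scalemxAr mxE. Qed.
Lemma innerZl {R : realType} {n : nat} (u : 'cV[R]_n) a v : inner (a *: v) u = a * inner v u.
Proof. by rewrite innerC innerZr innerC. Qed.
Lemma innerNr {R : realType} {n : nat} (u v : 'cV[R]_n) : inner u (- v) = - inner u v.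
Proof. by rewrite -scaleN1r innerZr mulN1r. Qed.
Lemma innerNl {R : realType} {n : nat} (u v : 'cV[R]_n) : inner (- v) u = - inner v u.
Proof. by rewrite -scaleN1r innerZl mulN1r. Qed.
Lemma innerBr {R : realType} {n : nat} (u v w : 'cV[R]_n) : inner u (v - w) = inner u v - inner u w.
Proof. by rewrite innerDr innerNr. Qed.
Lemma innerBl {R : realType} {n : nat} (u v w : 'cV[R]_n) : inner (v - w) u = inner v u - inner w u.
Proof. by rewrite innerDl innerNl. Qed.
Lemma inner0r {R : realType} {n : nat} (u : 'cV[R]_n) : inner u 0 = 0.
Proof. by rewrite /inner mulmx0 mxE. Qed.
Lemma inner0l {R : realType} {n : nat} (u : 'cV[R]_n) : inner 0 u = 0.
Proof. by rewrite innerC inner0r. Qed.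
Lemma inner_mulmx {R : realType} {n : nat} (u : 'cV[R]_n) (A : 'M[R]_n) v :
  inner u (A *m v) = inner (A^T *m u) v.
Proof. by rewrite /inner trmx_mul trmxK mulmxA. Qed.
Lemma qformE {R : realType} {n : nat} (Q : 'M[R]_n) v : qform Q v = inner v (Q *m v).
Proof. by rewrite /qform /inner mulmxA. Qed.

Lemma spd_ge0 {R : realType} {n : nat} {Q : 'M[R]_n} v : spd Q -> 0 <= qform Q v.
Proof.
case=> _ H; have [->|nz] := eqVneq v 0.
  by rewrite qformE mulmx0 inner0r.
exact/ltW/H.
Qed.

Lemma spd_unit {R : realType} {n : nat} {Q : 'M[R]_n} : spd Q -> Q \in unitmx.
Proof.
move=> [sy H]; rewrite unitmxE unitfE; apply/negP => /det0P [r nz rQ].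
have : 0 < qform Q r^T by apply: H; rewrite trmx_eq0.
by rewrite /qform trmxK rQ mul0mx mxE ltxx.
Qed.

Lemma inner_self_eq0 {R : realType} {n : nat} (u : 'cV[R]_n) : inner u u = 0 -> u = 0.
Proof.
rewrite /inner mxE.
under eq_bigr => k _ do rewrite mxE.
move=> /eqP; rewrite psumr_eq0 => [/allP H|k _]; last by rewrite -expr2 sqr_ge0.
apply/matrixP => i j; rewrite (ord1 j) mxE.
by have /(_ (mem_index_enum _)) := H i; rewrite /= mulf_eq0 orbb => /eqP.
Qed.

Lemma Qinv_sym {R : realType} {n : nat} (Q : 'M[R]_n) : spd Q -> (invmx Q)^T = invmx Q.
Proof. by case=> sy _; rewrite trmx_inv sy. Qed.

Lemma qformZ {R : realType} {n : nat} (A : 'M[R]_n) a v : qform A (a *: v) = a ^+ 2 * qform A v.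
Proof. by rewrite !qformE -scalemxAr innerZr innerZl mulrA expr2. Qed.

Lemma qformN {R : realType} {n : nat} (A : 'M[R]_n) v : qform A (- v) = qform A v.
Proof. by rewrite -scaleN1r qformZ expr2 mulN1r opprK mul1r. Qed.

Lemma qformB {R : realType} {n : nat} (M : 'M[R]_n) a b : M^T = M ->
  qform M (a - b) = qform M a - 2 * inner a (M *m b) + qform M b.
Proof.
move=> sy; rewrite !qformE mulmxBr innerBl !innerBr.
rewrite (innerC b (M *m a)) inner_mulmx sy [inner a (M *m b)]inner_mulmx sy.
by rewrite mulr2n mulrDl mul1r; lra.
Qed.

Lemma qform_inv {R : realType} {n : nat} (Q : 'M[R]_n) g : spd Q ->
  qform Q (invmx Q *m g) = qform (invmx Q) g.
Proof.
move=> sQ; have uQ := spd_unit sQ.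
rewrite !qformE mulmxA mulmxV // mul1mx inner_mulmx Qinv_sym //.
Qed.

Lemma qform_inv_ge0 {R : realType} {n : nat} (Q : 'M[R]_n) g : spd Q -> 0 <= qform (invmx Q) g.
Proof. by move=> sQ; rewrite -qform_inv // spd_ge0. Qed.

Lemma young {R : realType} {n : nat} (Q : 'M[R]_n) g v : spd Q ->
  2 * inner g v <= qform (invmx Q) g + qform Q v.
Proof.
move=> sQ; have uQ := spd_unit sQ; have [sy _] := sQ.
have := spd_ge0 (invmx Q *m g - v) sQ.
rewrite qformB // qform_inv // inner_mulmx sy mulmxA mulmxV // mul1mx; lra.
Qed.

Lemma convex_grad {R : realType} {n : nat} (f : 'cV[R]_n -> R) g :
  convex_fun f -> is_gradient f g -> forall a b, f a + inner (g a) (b - a) <= f b.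
Proof.
move=> cf [df dg] a b.
suff : 'd f a (b - a) <= f b - f a by rewrite dg; lra.
apply: dir_le => // t /andP [t0 t1].
have -> : a + t *: (b - a) = t *: b + (1 - t) *: a.
  by rewrite scalerBr scalerBl scale1r addrCA.
rewrite ler_pdivrMr //.
have := cf b a t; rewrite (ltW t0) (ltW t1) => /(_ isT); lra.
Qed.

Lemma lipsq {R : realType} {n : nat} (Q : 'M[R]_n) (g : 'cV[R]_n -> 'cV[R]_n) L :
  spd Q -> 0 < L -> (forall u v, Qdnorm Q (g u - g v) <= L * Qnorm Q (u - v)) ->
  forall u v, qform (invmx Q) (g u - g v) <= L ^+ 2 * qform Q (u - v).
Proof.
move=> sQ L0 H u v; have := H u v.
rewrite /Qdnorm /Qnorm.
have h1 := qform_inv_ge0 _ (g u - g v) sQ.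
have h2 := spd_ge0 (u - v) sQ.
have eL : L = Num.sqrt (L ^+ 2) by rewrite sqrtr_sqr ger0_norm // ltW.
rewrite [X in X * _]eL -sqrtrM ?sqr_ge0 //.
by rewrite ler_sqrt // mulr_ge0 // sqr_ge0.
Qed.

Lemma cs_L {R : realType} {n : nat} (Q : 'M[R]_n) (u d : 'cV[R]_n) L t :
  spd Q -> 0 < L -> 0 < t ->
  qform (invmx Q) u <= L ^+ 2 * t ^+ 2 * qform Q d -> inner u d <= L * t * qform Q d.
Proof.
move=> sQ L0 t0 H.
set l := (L * t)^-1.
have l0 : 0 < l by rewrite invr_gt0 mulr_gt0.
have := young Q (l *: u) d sQ.
rewrite qformZ innerZl.
have : l ^+ 2 * qform (invmx Q) u <= l ^+ 2 * (L ^+ 2 * t ^+ 2 * qform Q d).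
  by rewrite ler_wpM2l // sqr_ge0.
have -> : l ^+ 2 * (L ^+ 2 * t ^+ 2 * qform Q d) = qform Q d.
  rewrite /l -exprMn mulrA -exprMn mulVf ?expr1n ?mul1r //.
  by rewrite mulf_neq0 // gt_eqF.
move=> h1 h2.
have h3 : l * inner u d <= qform Q d by lra.
have : inner u d = (L * t) * (l * inner u d).
  by rewrite mulrA /l mulfV ?mul1r // mulf_neq0 // gt_eqF.
move=> ->; rewrite ler_pM2l ?mulr_gt0 //.
Qed.

Lemma lim_inv {R : realType} (x y C : R) : 0 <= C ->
  (forall N : nat, x <= y + C / N.+1%:R) -> x <= y.
Proof.
move=> C0 H; apply/ler_addgt0Pr => e e0.
have [C00|Cn0] := eqVneq C 0.
  by have := H 0%N; rewrite C00 mul0r addr0 => h; lra.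
have Cp : 0 < C by rewrite lt_def Cn0.
have [k hk] := ltr_add_invr (divr_gt0 e0 Cp); rewrite add0r in hk.
apply: (le_trans (H k)); rewrite lerD2l.
have : C * k.+1%:R^-1 < C * (e / C) by rewrite ltr_pM2l.
by rewrite [C * (e / C)]mulrC divfK ?gt_eqF // => /ltW.
Qed.

Lemma descent {R : realType} {n : nat} {Q : 'M[R]_n} {f : 'cV[R]_n -> R} {g : 'cV[R]_n -> 'cV[R]_n} {L : R} :
  spd Q -> 0 < L ->
  (forall a b, f a + inner (g a) (b - a) <= f b) ->
  (forall u v, qform (invmx Q) (g u - g v) <= L ^+ 2 * qform Q (u - v)) ->
  forall a b, f b <= f a + inner (g a) (b - a) + L / 2 * qform Q (b - a).
Proof.
move=> sQ L0 GI LS a b.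
set d := b - a; set D := qform Q d; set I := inner (g a) d.
have D0 : 0 <= D := spd_ge0 d sQ.
suff : f b - f a <= I + L * D / 2 by lra.
apply: (@lim_inv _ _ _ (L * D / 2)); first by rewrite divr_ge0 // mulr_ge0 // ltW.
move=> N.
set r : R := N.+1%:R.
have r0 : 0 < r by rewrite ltr0n.
set s := r^-1.
have s0 : 0 < s by rewrite invr_gt0.
have ind : forall j : nat, f (a + (j%:R * s) *: d) - f a <=
    j%:R * s * I + L * D * s ^+ 2 * (j%:R * (j%:R + 1) / 2).
  elim => [|j IH].
    by rewrite mul0r scale0r addr0 subrr !mul0r mulr0 addr0.
  set p := a + (j%:R * s) *: d.
  set p' := a + (j.+1%:R * s) *: d.
  have ep : p' = p + s *: d by rewrite /p' /p -natr1 mulrDl mul1r scalerDl addrA.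
  have h1 := GI p' p.
  have e2 : p - p' = - (s *: d) by rewrite ep opprD addrA subrr add0r.
  rewrite e2 innerNr innerZr in h1.
  have h2 : inner (g p') d = I + inner (g p' - g a) d by rewrite innerBl /I; lra.
  have t0 : 0 < j.+1%:R * s by rewrite mulr_gt0 // ltr0n.
  have h3 : inner (g p' - g a) d <= L * (j.+1%:R * s) * D.
    apply: cs_L => //.
    have := LS p' a.
    have -> : p' - a = (j.+1%:R * s) *: d by rewrite /p' addrC addKr.
    by rewrite qformZ mulrA.
  have h4 : s * inner (g p' - g a) d <= s * (L * (j.+1%:R * s) * D) by rewrite ler_pM2l.
  rewrite -natr1 in h4 *.
  move: IH h1 h4; rewrite h2 -/p; nra.
have := ind N.+1.
have ad : a + d = b by rewrite /d addrC subrK.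
rewrite -/r /s mulfV ?gt_eqF // scale1r ad.
have -> : L * D * r^-1 ^+ 2 * (r * (r + 1) / 2) = L * D / 2 + L * D / 2 / r.
  by field; rewrite gt_eqF.
by rewrite mul1r addrA.
Qed.

Lemma gstep {R : realType} {n : nat} {Q : 'M[R]_n} {f : 'cV[R]_n -> R} {g : 'cV[R]_n -> 'cV[R]_n} {L : R} :
  spd Q -> 0 < L ->
  (forall a b, f a + inner (g a) (b - a) <= f b) ->
  (forall u v, qform (invmx Q) (g u - g v) <= L ^+ 2 * qform Q (u - v)) ->
  forall a, f (a - L^-1 *: (invmx Q *m g a)) <= f a - qform (invmx Q) (g a) / (2 * L).
Proof.
move=> sQ L0 GI LS a.
have := descent sQ L0 GI LS a (a - L^-1 *: (invmx Q *m g a)).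
have -> : a - L^-1 *: (invmx Q *m g a) - a = - (L^-1 *: (invmx Q *m g a)).
  by rewrite addrC addKr.
rewrite qformN qformZ qform_inv // innerNr innerZr -qformE.
set G := qform (invmx Q) (g a).
have -> : L / 2 * (L^-1 ^+ 2 * G) = L^-1 * G / 2 by field; rewrite gt_eqF.
have -> : G / (2 * L) = L^-1 * G / 2 by field; rewrite gt_eqF.
lra.
Qed.

Lemma cocoercive {R : realType} {n : nat} {Q : 'M[R]_n} {f : 'cV[R]_n -> R} {g : 'cV[R]_n -> 'cV[R]_n} {L : R} :
  spd Q -> 0 < L ->
  (forall a b, f a + inner (g a) (b - a) <= f b) ->
  (forall u v, qform (invmx Q) (g u - g v) <= L ^+ 2 * qform Q (u - v)) ->
  forall a b, f b + inner (g b) (a - b) + qform (invmx Q) (g a - g b) / (2 * L) <= f a.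
Proof.
move=> sQ L0 GI LS a b.
pose phi := fun x => f x - inner (g b) x.
pose gphi := fun x => g x - g b.
have GIp : forall a' b', phi a' + inner (gphi a') (b' - a') <= phi b'.
  move=> a' b'; rewrite /phi /gphi innerBl !innerBr.
  have := GI a' b'; rewrite innerBr; lra.
have LSp : forall u v, qform (invmx Q) (gphi u - gphi v) <= L ^+ 2 * qform Q (u - v).
  move=> u v; rewrite /gphi.
  have -> : g u - g b - (g v - g b) = g u - g v by rewrite opprB addrA subrK.
  exact: LS.
have h1 := gstep sQ L0 GIp LSp a.
have h2 := GIp b (a - L^-1 *: (invmx Q *m gphi a)).
rewrite {1}/gphi subrr inner0l addr0 in h2.
have := le_trans h2 h1.
rewrite /phi /gphi innerBr; lra.
Qed.

Lemma grad_min {R : realType} {n : nat} (f : 'cV[R]_n -> R) g xs :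
  is_gradient f g -> (forall u, f xs <= f u) -> g xs = 0.
Proof.
move=> [df dg] H.
have key : forall h, 0 <= inner (g xs) h.
  move=> h; rewrite -dg; apply: dir_ge => // t /andP [t0 _].
  by rewrite divr_ge0 ?subr_ge0 // ltW.
apply: inner_self_eq0; apply/eqP; rewrite eq_le key andbT.
by have := key (- g xs); rewrite innerNr oppr_ge0.
Qed.

Lemma mirror3 {R : realType} {n : nat} (w : 'cV[R]_n -> R) gw (z z' x gg : 'cV[R]_n) (c : R) :
  is_gradient w gw ->
  (forall u, bregman w gw z z' + inner (c *: gg) (z' - x) <=
             bregman w gw z u + inner (c *: gg) (u - x)) ->
  forall u, bregman w gw z u + inner (c *: gg) (u - x)
            - bregman w gw z z' - inner (c *: gg) (z' - x) = bregman w gw z' u.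
Proof.
move=> [dw dgw] H.
have key : forall h, inner (gw z) h - inner (c *: gg) h <= inner (gw z') h.
  move=> h; rewrite -(dgw z' h); apply: (@dir_ge R n w z' h _ (dw z')) => t /andP [t0 _].
  rewrite ler_pdivlMr //.
  have := H (z' + t *: h); rewrite /bregman.
  rewrite !innerBr !innerDr !innerZr; lra.
move=> u.
have E1 := key (u - z'); have E2 := key (- (u - z')).
rewrite !innerNr in E2.
rewrite /bregman.
move: E1 E2; rewrite !innerBr; lra.
Qed.

Lemma Qnorm_sq {R : realType} {n : nat} (Q : 'M[R]_n) v : spd Q -> Qnorm Q v ^+ 2 = qform Q v.
Proof. by move=> sQ; rewrite /Qnorm sqr_sqrtr // spd_ge0. Qed.

Lemma step {R : realType} {n : nat} (Q : 'M[R]_n) (f : 'cV[R]_n -> R) gf L w gw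
  (xs xk xp zk zk1 : 'cV[R]_n) (c B : R) :
  spd Q -> 0 < L ->
  (forall a b, f a + inner (gf a) (b - a) <= f b) ->
  (forall u v, qform (invmx Q) (gf u - gf v) <= L ^+ 2 * qform Q (u - v)) ->
  is_gradient w gw -> strongly_convex1 Q w gw ->
  gf xs = 0 -> 0 < c -> 0 <= B -> L * c ^+ 2 / 2 = B + c ->
  (B + c) *: xk = B *: (xp - L^-1 *: (invmx Q *m gf xp)) + c *: zk ->
  (forall u, bregman w gw zk zk1 + inner (c *: gf xk) (zk1 - xk) <=
             bregman w gw zk u + inner (c *: gf xk) (u - xk)) ->
  (B + c) * (f xk - f xs - qform (invmx Q) (gf xk) / (2 * L)) + bregman w gw zk1 xs
  <= B * (f xp - f xs - qform (invmx Q) (gf xp) / (2 * L)) + bregman w gw zk xs.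
Proof.
move=> sQ L0 GI LS gw_ sc gs0 c0 B0 hA hx hm.
have sy := Qinv_sym Q sQ.
have hi := cocoercive sQ L0 GI LS xs xk.
rewrite gs0 sub0r qformN in hi.
have hii := cocoercive sQ L0 GI LS xp xk.
rewrite qformB // in hii.
have hvii := congr1 (inner (gf xk)) hx.
rewrite innerDr !innerZr innerBr innerZr inner_mulmx sy [inner (invmx Q *m gf xk) (gf xp)]innerC in hvii.
have hiii := @mirror3 _ _ w gw zk zk1 xk (gf xk) c gw_ hm xs.
have hiv := sc zk zk1; rewrite Qnorm_sq // in hiv.
have hv := young Q (c *: gf xk) (zk - zk1) sQ.
rewrite qformZ -opprB qformN innerZl innerNr innerBr in hv.
move: hi hii hvii hiii hiv hv.
rewrite /bregman !innerBr !innerZl.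
set G := qform (invmx Q) (gf xk).
set Gp := qform (invmx Q) (gf xp).
set C := inner (gf xp) (invmx Q *m gf xk).
set Dz := qform Q (zk1 - zk).
have eG : G / (2 * L) = (G / L) / 2 by field; rewrite gt_eqF.
have eGp : Gp / (2 * L) = (Gp / L) / 2 by field; rewrite gt_eqF.
have eGp' : (Gp - 2 * C + G) / (2 * L) = (Gp / L) / 2 - C / L + (G / L) / 2 by field; rewrite gt_eqF.
have eC : L^-1 * C = C / L by rewrite mulrC.
have ec2 : c ^+ 2 * G = 2 * (B + c) * (G / L).
  by rewrite -hA; field; rewrite gt_eqF.
rewrite eG eGp eGp' eC ec2.
set gk := G / L; set gp := Gp / L; set cc := C / L.
move=> hi hii hvii hiii hiv hv.
have hi' := ler_wpM2l (ltW c0) hi.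
have hii' := ler_wpM2l B0 hii.
lra.
Qed.

Lemma bregman_ge0 {R : realType} {n : nat} (Q : 'M[R]_n) w gw x y :
  spd Q -> strongly_convex1 Q w gw -> 0 <= bregman w gw x y.
Proof.
move=> sQ sc; have := sc x y; rewrite Qnorm_sq // /bregman.
have := spd_ge0 (y - x) sQ; lra.
Qed.

Theorem theorem5 (R : realType) (n : nat) (Q : 'M[R]_n)
  (f : 'cV[R]_n -> R) (gf : 'cV[R]_n -> 'cV[R]_n) (L : R)
  (w : 'cV[R]_n -> R) (gw : 'cV[R]_n -> 'cV[R]_n)
  (xstar : 'cV[R]_n) (alpha : nat -> R)
  (x y z : nat -> 'cV[R]_n) :
  spd Q ->
  convex_fun f -> is_gradient f gf ->
  0 < L ->
  (forall u v, Qdnorm Q (gf u - gf v) <= L * Qnorm Q (u - v)) ->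
  (forall u, f xstar <= f u) ->
  is_gradient w gw -> strongly_convex1 Q w gw ->
  (forall k, (1 <= k)%N -> 0 < alpha k) ->
  alpha 1%N = 2 / L ->
  (forall k, (1 <= k)%N ->
     0 <= alpha k.+1 ^+ 2 * L - 2 * alpha k.+1 <= alpha k ^+ 2 * L) ->
  z 0%N = x 0%N ->
  (forall k, y k.+1 = x k - L^-1 *: (invmx Q *m gf (x k))) ->
  (forall k u, bregman w gw (z k) (z k.+1) + inner (alpha k.+1 *: gf (x k)) (z k.+1 - x k)
             <= bregman w gw (z k) u + inner (alpha k.+1 *: gf (x k)) (u - x k)) ->
  (forall k, let tau := 2 / (alpha k.+2 * L) in
     x k.+1 = (1 - tau) *: y k.+1 + tau *: z k.+1) ->
  forall k, (1 <= k)%N ->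
    f (y k) - f xstar <= 2 * bregman w gw (x 0%N) xstar / (L * alpha k ^+ 2).
Proof.
move=> sQ cf gradf L0 Lip fmin gradw sc apos a1 arec z0 ystep mir coup.
have GI := @convex_grad _ _ f gf cf gradf.
have LS := @lipsq _ _ Q gf L sQ L0 Lip.
have gs0 := @grad_min _ _ f gf xstar gradf fmin.
pose G j := qform (invmx Q) (gf (x j)).
pose A j := L * alpha j ^+ 2 / 2.
pose P j := A j.+1 * (f (x j) - f xstar - G j / (2 * L)) + bregman w gw (z j.+1) xstar.
have Xge0 : forall j, 0 <= f (x j) - f xstar - G j / (2 * L).
  move=> j; have := gstep sQ L0 GI LS (x j); rewrite -ystep.
  have := fmin (y j.+1); rewrite /G; lra.
have HP : forall j, P j <= bregman w gw (x 0%N) xstar.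
  elim => [|j IH].
    have c0 : 0 < alpha 1%N by apply: apos.
    have m0 := mir 0%N; rewrite z0 in m0.
    have := @step R n Q f gf L w gw xstar (x 0%N) (x 0%N) (x 0%N) (z 1%N) (alpha 1%N) 0
      sQ L0 GI LS gradw sc gs0 c0 (lexx _) _ _ m0.
    rewrite /P /A add0r mul0r add0r.
    have -> : L * alpha 1%N ^+ 2 / 2 = alpha 1%N by rewrite a1; field; rewrite gt_eqF.
    by move=> H; apply: H => //; rewrite scale0r add0r.
  have [hB1 hB2] := andP (arec j.+1 isT).
  set c := alpha j.+2.
  have c0 : 0 < c by apply: apos.
  set B := A j.+2 - c.
  have B0 : 0 <= B.
    rewrite /B /A; move: hB1; rewrite -/c; clearbody c; lra.
  have := @step R n Q f gf L w gw xstar (x j.+1) (x j) (z j.+1) (z j.+2) c B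
      sQ L0 GI LS gradw sc gs0 c0 B0 _ _ (mir j.+1).
  have eA : B + c = A j.+2 by rewrite /B subrK.
  rewrite eA.
  have hc := coup j; rewrite /= -/c in hc.
  move=> H.
  have e1 : A j.+2 * (2 / (c * L)) = c.
    by rewrite /A -/c; field; rewrite ?gt_eqF.
  have e2 : A j.+2 * (1 - 2 / (c * L)) = B by rewrite mulrBr mulr1 e1.
  have ex : A j.+2 *: x j.+1 = B *: (x j - L^-1 *: (invmx Q *m gf (x j))) + c *: z j.+1.
    by rewrite -ystep {1}hc scalerDr !scalerA e1 e2.
  have H3 := H (erefl _) ex.
  have BA : B <= A j.+1.
    rewrite /B /A; move: hB2; rewrite -/c; clearbody c; lra.
  have H4 := ler_wpM2r (Xge0 j) BA.
  apply: le_trans IH.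
  rewrite /P.
  apply: (le_trans H3).
  by rewrite lerD2r.
move=> k; case: k => [//|j] _.
have hy := gstep sQ L0 GI LS (x j); rewrite -ystep in hy.
have := HP j; rewrite /P /A.
have := @bregman_ge0 R n Q w gw (z j.+1) xstar sQ sc.
have aj : 0 < alpha j.+1 by apply: apos.
have den : 0 < L * alpha j.+1 ^+ 2 by rewrite mulr_gt0 // exprn_gt0.
rewrite ler_pdivlMr //.
move: hy; rewrite /G.
set V0 := bregman w gw (x 0%N) xstar.
set X := f (x j) - f xstar - qform (invmx Q) (gf (x j)) / (2 * L).
move=> hy hb hP.
have hX : f (y j.+1) - f xstar <= X by rewrite /X; lra.
have := ler_wpM2l (ltW den) hX.
clearbody V0 X; nra.
Qed.
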